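(* Let $k,\ell$ be non-negative integers with $\ell<2k$. Let $D$ be an orientation of a $(k,\ell)$-sparse loopless multigraph $H=(V,F)$ in which every vertex has indegree at most $k$, and let $u,v\in V$ be distinct with $\varrho_D(u)+\varrho_D(v)\le 2k-\ell$. A set $X\subseteq V$ containing both $u$ and $v$ is a $(k,\ell)$-block of $H$ if and only if $\varrho_D(u)+\varrho_D(v)=2k-\ell$, $\varrho_D(X)=0$, and every vertex in $X\setminus\{u,v\}$ has indegree exactly $k$ in $D$.
   Context: For $X\subseteq V$, $i_H(X)$ is the number of edges of $H$ with both endpoints in $X$. $H$ is $(k,\ell)$-sparse if $i_H(X)\le\max\{k|X|-\ell,0\}$ for every $X\subseteq V$. A $(k,\ell)$-block of $H$ is a set $X\subseteq V$ with $i_H(X)=\max\{k|X|-\ell,0\}$. For a vertex $w$, $\varrho_D(w)$ is its indegree in $D$; for a set $X\subseteq V$, $\varrho_D(X)$ is the number of arcs of $D$ with tail in $V\setminus X$ and head in $X$. *)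

(* Defs.v *)
From mathcomp Require Import all_boot.
Set Implicit Arguments. Unset Strict Implicit. Unset Printing Implicit Defensive.

(* A directed multigraph D on vertex set V with arc set E: each arc e goes
   from [tl e] to [hd e].  Its underlying undirected multigraph is H
   (same edge set, endpoints {tl e, hd e}); D is an orientation of H. *)

Definition iH (V E : finType) (tl hd : E -> V) (X : {set V}) : nat :=
  #|[set e : E | (tl e \in X) && (hd e \in X)]|.

(* (k,l)-sparse: i_H(X) <= max(k|X| - l, 0) (truncated nat subtraction = max) *)
Definition sparse (V E : finType) (tl hd : E -> V) (k l : nat) : Prop :=
  forall X : {set V}, iH tl hd X <= k * #|X| - l.

Definition block (V E : finType) (tl hd : E -> V) (k l : nat) (X : {set V}) : Prop :=
  iH tl hd X = k * #|X| - l.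

Definition indeg (V E : finType) (tl hd : E -> V) (w : V) : nat :=
  #|[set e : E | hd e == w]|.

Definition indegS (V E : finType) (tl hd : E -> V) (X : {set V}) : nat :=
  #|[set e : E | (tl e \notin X) && (hd e \in X)]|.

(* Main.v *)
Require Import Defs.
From mathcomp Require Import all_boot.
From mathcomp Require Import zify.

Lemma card_set_sum (E : finType) (P : pred E) : #|[set e | P e]| = \sum_e P e.
Proof.
rewrite -sum1_card big_mkcond /=; apply: eq_bigr => e _; rewrite inE.
by case: (P e).
Qed.

Lemma sum_indeg {V E : finType} (tl hd : E -> V) (X : {set V}) :
  \sum_(w in X) indeg tl hd w = iH tl hd X + indegS tl hd X.
Proof.
rewrite /indeg /iH /indegS.
under eq_bigr => w _ do rewrite card_set_sum.
rewrite exchange_big /= !card_set_sum -big_split /=.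
apply: eq_bigr => e _.
case hX: (hd e \in X).
  rewrite (bigD1 (hd e)) //= eqxx big1 ?addn0.
    by case: (tl e \in X).
  by move=> w /andP [_ /negbTE]; rewrite eq_sym => ->.
rewrite big1 ?andbF //.
by move=> w wX; case: eqP => // he; rewrite he wX in hX.
Qed.

Lemma sum_le_eq {V : finType} (A : {set V}) (f : V -> nat) (k : nat) :
  (forall w, f w <= k) -> \sum_(w in A) f w = #|A| * k ->
  forall w, w \in A -> f w = k.
Proof.
move=> hf hs w wA; apply/eqP; rewrite eqn_leq hf /=; apply/negPn/negP.
rewrite -ltnNge => hlt.
have : \sum_(w in A) f w < \sum_(w in A) k.
  rewrite (bigD1 w) //= [X in _ < X](bigD1 w) //=.
  rewrite -addSn leq_add //; by apply: leq_sum => i _.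
by rewrite sum_nat_const hs ltnn.
Qed.

Theorem lemma3 (V E : finType) (tl hd : E -> V) (k l : nat)
  (hl : l < 2 * k)
  (loopless : forall e : E, tl e != hd e)
  (hsparse : sparse tl hd k l)
  (hindeg : forall w : V, indeg tl hd w <= k)
  (u v : V) (huv : u != v)
  (huv_deg : indeg tl hd u + indeg tl hd v <= 2 * k - l)
  (X : {set V}) (huX : u \in X) (hvX : v \in X) :
  block tl hd k l X <->
  [/\ indeg tl hd u + indeg tl hd v = 2 * k - l,
      indegS tl hd X = 0 &
      forall w : V, w \in X -> w != u -> w != v -> indeg tl hd w = k].
Proof.
have hS := sum_indeg tl hd X.
have hv' : v \in X :\ u by rewrite !inE eq_sym huv hvX.
rewrite (bigD1 u) //= (bigD1 v) /= in hS; last by rewrite eq_sym huv hvX.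
rewrite (eq_bigl (mem (X :\ u :\ v))) in hS; last first.
  by move=> i /=; rewrite !inE; case: (i \in X); case: (i == u); case: (i == v).
have hc : #|X| = #|X :\ u :\ v| + 2.
  by rewrite (cardsD1 u X) huX (cardsD1 v (X :\ u)) hv'; lia.
have hT : \sum_(i in X :\ u :\ v) indeg tl hd i <= #|X :\ u :\ v| * k.
  by rewrite -sum_nat_const; apply: leq_sum.
rewrite /block hc.
set T := \sum_(i in X :\ u :\ v) indeg tl hd i in hS hT *.
split.
- move=> hb.
  have ha : indeg tl hd u + indeg tl hd v = 2 * k - l by nia.
  have hT' : T = #|X :\ u :\ v| * k by nia.
  split => //; first by nia.
  move=> w wX wu wv; apply: (@sum_le_eq _ (X :\ u :\ v)) => //.
  by rewrite !inE wX wu wv.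
- case=> ha h0 hw.
  have hT' : T = #|X :\ u :\ v| * k.
    rewrite /T -sum_nat_const; apply: eq_bigr => w.
    by rewrite !inE => /and3P [wv wu wX]; apply: hw.
  nia.
Qed.
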